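(* Let $R$ be a commutative ring with unit, $M$ an $R$-module, $\mathbf A$ a $k\times l$ matrix with entries in $R$, and $r\ge1$ an integer. (1) If $S\subseteq R$ is a multiplicative subset containing no zero divisors on $M$ (i.e. $sm=0$ with $s\in S$, $m\in M$ implies $m=0$), then $\mathbf A$ is partition regular over $M$ for $r$ colours if and only if it is partition regular over $S^{-1}M$ for $r$ colours. (2) If $R$ is an integral domain with fraction field $K$, then $\mathbf A$ is partition regular over $R$ for $r$ colours if and only if it is partition regular over $K$ (as an $R$-module) for $r$ colours.
   Context: $\mathbf{A}$ is partition regular over an $R$-module $N$ for $r$ colours if for every map $\chi\colon N\to\{1,\dots,r\}$ there is $\mathbf{n}=(n_1,\dots,n_l)^{\intercal}\in N^l$ with $\mathbf{A}\mathbf{n}=0$, $\mathbf{n}\neq 0$ and $\chi(n_1)=\dots=\chi(n_l)$. *)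

(* Defs.v *)
From HB Require Import structures.
From mathcomp Require Import all_boot all_order all_algebra.
From mathcomp Require Import boolp.
From mathcomp Require Import generic_quotient fraction ring.

Set Implicit Arguments.
Unset Strict Implicit.
Unset Printing Implicit Defensive.

Import GRing.Theory.
Local Open Scope ring_scope.
Local Open Scope quotient_scope.

(* (the colours {1,...,r} are represented by 'I_r = {0,...,r-1}).           *)
Definition partition_regular (R : pzRingType) (N : lmodType R) (k l : nat)
    (A : 'M[R]_(k, l)) (r : nat) : Prop :=
  forall chi : N -> 'I_r,
    exists n : 'I_l -> N,
      [/\ forall i : 'I_k, \sum_(j < l) A i j *: n j = 0,
          exists j : 'I_l, n j != 0
        & forall j j' : 'I_l, chi (n j) = chi (n j')].

(* Localization S^-1 M of an R-module M at a multiplicative subset S of a    *)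
(* commutative ring R: pairs (m, s) with s \in S (written m/s), modulo       *)
(*      m/s ~ m'/s'  iff  u *: (s' *: m - s *: m') = 0 for some u \in S,     *)
Module Localization.
Section Loc.
Variables (R : comPzRingType) (M : lmodType R) (S : mulrClosed R).

Inductive lfrac := MkLfrac { lfval : M * R; _ : lfval.2 \in S }.
HB.instance Definition _ := [isSub for lfval].
HB.instance Definition _ := [Choice of lfrac by <:].

Definition num (x : lfrac) : M := (lfval x).1.
Definition den (x : lfrac) : R := (lfval x).2.

Lemma denP (x : lfrac) : den x \in S. Proof. by case: x. Qed.

Definition eqv (x y : lfrac) : bool :=
  `[< exists2 u, u \in S & u *: (den y *: num x - den x *: num y) = 0 >].

Lemma eqvP (x y : lfrac) :
  reflect (exists2 u, u \in S & (u * den y) *: num x = (u * den x) *: num y)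
          (eqv x y).
Proof.
apply: (iffP (asboolP _)) => -[u uS H]; exists u => //.
  by apply/eqP; rewrite -!scalerA -subr_eq0 -scalerBr H.
by apply/eqP; rewrite scalerBr !scalerA subr_eq0 H.
Qed.

Lemma eqv_refl : reflexive eqv.
Proof. by move=> x; apply/eqvP; exists 1; rewrite ?rpred1. Qed.

Lemma eqv_sym : symmetric eqv.
Proof. by move=> x y; apply/eqvP/eqvP => -[u uS H]; exists u. Qed.

Lemma eqv_trans : transitive eqv.
Proof.
move=> y x z /eqvP[u uS H1] /eqvP[v vS H2]; apply/eqvP.
exists (u * v * den y); first by rewrite !rpredM ?denP.
apply: (@eq_trans _ _ ((v * den z) *: ((u * den y) *: num x))).
  by rewrite scalerA; congr (_ *: _); ring.
rewrite H1 scalerA.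
apply: (@eq_trans _ _ ((u * den x) *: ((v * den z) *: num y))).
  by rewrite scalerA; congr (_ *: _); ring.
by rewrite H2 scalerA; congr (_ *: _); ring.
Qed.

Canonical eqv_equiv := EquivRel eqv eqv_refl eqv_sym eqv_trans.

Definition type := {eq_quot eqv}.
HB.instance Definition _ : EqQuotient _ eqv type := EqQuotient.on type.
HB.instance Definition _ := Choice.on type.

Lemma eqv_repr x : eqv x (repr (\pi_type x)).
Proof. by apply/(@eqquotP _ _ type); rewrite reprK. Qed.

Definition zerof : lfrac := @MkLfrac (0, 1) (rpred1 S).
Definition addf (x y : lfrac) : lfrac :=
  @MkLfrac (den y *: num x + den x *: num y, den x * den y)
           (rpredM (denP x) (denP y)).
Definition oppf (x : lfrac) : lfrac := @MkLfrac (- num x, den x) (denP x).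
Definition scalef (a : R) (x : lfrac) : lfrac :=
  @MkLfrac (a *: num x, den x) (denP x).

Lemma num_addf x y : num (addf x y) = den y *: num x + den x *: num y.
Proof. by []. Qed.
Lemma den_addf x y : den (addf x y) = den x * den y. Proof. by []. Qed.
Lemma num_oppf x : num (oppf x) = - num x. Proof. by []. Qed.
Lemma den_oppf x : den (oppf x) = den x. Proof. by []. Qed.
Lemma num_scalef a x : num (scalef a x) = a *: num x. Proof. by []. Qed.
Lemma den_scalef a x : den (scalef a x) = den x. Proof. by []. Qed.
Lemma num_zerof : num zerof = 0. Proof. by []. Qed.
Lemma den_zerof : den zerof = 1. Proof. by []. Qed.
Definition lfE := (num_addf, den_addf, num_oppf, den_oppf, num_scalef,
  den_scalef, num_zerof, den_zerof).

Lemma addf_eqv x x' y y' : eqv x x' -> eqv y y' -> eqv (addf x y) (addf x' y').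
Proof.
move=> /eqvP[u uS Hx] /eqvP[v vS Hy]; apply/eqvP; exists (u * v).
  by rewrite rpredM.
rewrite /addf /num /den /= -/(num x) -/(num y) -/(den x) -/(den y)
  -/(num x') -/(num y') -/(den x') -/(den y') !scalerDr !scalerA.
apply: (@eq_trans _ _ ((v * den y' * den y) *: ((u * den x') *: num x)
                   + (u * den x' * den x) *: ((v * den y') *: num y))).
  by rewrite !scalerA; congr (_ + _); congr (_ *: _); ring.
apply: (@eq_trans _ _ ((v * den y' * den y) *: ((u * den x) *: num x')
                   + (u * den x' * den x) *: ((v * den y) *: num y'))).
  by congr (_ + _); congr (_ *: _).
by rewrite !scalerA; congr (_ + _); congr (_ *: _); ring.
Qed.

Lemma oppf_eqv x x' : eqv x x' -> eqv (oppf x) (oppf x').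
Proof.
by move=> /eqvP[u uS Hx]; apply/eqvP; exists u => //; rewrite /= !scalerN Hx.
Qed.

Lemma scalef_eqv a x x' : eqv x x' -> eqv (scalef a x) (scalef a x').
Proof.
move=> /eqvP[u uS Hx]; apply/eqvP; exists u => //=.
rewrite /num /den /= -/(num x) -/(num x') -/(den x) -/(den x').
apply: (@eq_trans _ _ (a *: ((u * den x') *: num x))).
  by rewrite !scalerA; congr (_ *: _); ring.
apply: (@eq_trans _ _ (a *: ((u * den x) *: num x'))).
  by congr (_ *: _).
by rewrite !scalerA; congr (_ *: _); ring.
Qed.

Definition zero : type := \pi_type zerof.
Fact op_key : unit. Proof. exact: tt. Qed.
Definition add : type -> type -> type :=
  locked_with op_key (fun x y => \pi_type (addf (repr x) (repr y))).
Definition opp : type -> type :=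
  locked_with op_key (fun x => \pi_type (oppf (repr x))).
Definition scale : R -> type -> type :=
  locked_with op_key (fun a x => \pi_type (scalef a (repr x))).

Lemma pi_add x y : add (\pi_type x) (\pi_type y) = \pi_type (addf x y).
Proof.
rewrite /add locked_withE.
apply/(@eqquotP _ _ type); rewrite eqv_sym; apply: addf_eqv; exact: eqv_repr.
Qed.

Lemma pi_opp x : opp (\pi_type x) = \pi_type (oppf x).
Proof. rewrite /opp locked_withE.
apply/(@eqquotP _ _ type); rewrite eqv_sym; apply: oppf_eqv; exact: eqv_repr. Qed.

Lemma pi_scale a x : scale a (\pi_type x) = \pi_type (scalef a x).
Proof.
rewrite /scale locked_withE.
apply/(@eqquotP _ _ type); rewrite eqv_sym; apply: scalef_eqv; exact: eqv_repr.
Qed.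

Lemma lfrac_eq (x y : lfrac) : num x = num y -> den x = den y -> x = y.
Proof.
case: x y => [[m s] Hs] [[m' s'] Hs'] /= e1 e2; apply: val_inj => /=.
by rewrite /num /den /= in e1 e2; rewrite e1 e2.
Qed.

Lemma addA : associative add.
Proof.
elim/quotW=> x; elim/quotW=> y; elim/quotW=> z; rewrite !pi_add.
congr \pi; apply: lfrac_eq; rewrite !lfE ?mulrA //.
rewrite !scalerDr !scalerA addrA; congr (_ + _ + _); congr (_ *: _); ring.
Qed.

Lemma addC : commutative add.
Proof.
elim/quotW=> x; elim/quotW=> y; rewrite !pi_add; congr \pi.
by apply: lfrac_eq; rewrite !lfE; [exact: addrC | exact: mulrC].
Qed.

Lemma add0 : left_id zero add.
Proof.
elim/quotW=> x; rewrite /zero pi_add; congr \pi.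
by apply: lfrac_eq; rewrite !lfE ?scaler0 ?add0r ?scale1r ?mul1r.
Qed.

Lemma addN : left_inverse zero opp add.
Proof.
elim/quotW=> x; rewrite /zero pi_opp pi_add; apply/(@eqquotP _ _ type)/eqvP.
exists 1; rewrite ?rpred1 // !lfE.
by rewrite scalerN addNr !scaler0.
Qed.

HB.instance Definition _ := GRing.isZmodule.Build type addA addC add0 addN.

Lemma scaleA a b (x : type) : scale a (scale b x) = scale (a * b) x.
Proof.
by elim/quotW: x => x; rewrite !pi_scale; congr \pi; apply: lfrac_eq;
  rewrite !lfE ?scalerA.
Qed.

Lemma scale1 : left_id 1 scale.
Proof.
by elim/quotW=> x; rewrite !pi_scale; congr \pi; apply: lfrac_eq;
  rewrite !lfE ?scale1r.
Qed.

Lemma scaleDr : right_distributive scale (@GRing.add type).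
Proof.
move=> a; elim/quotW=> x; elim/quotW=> y.
rewrite [_ + _]pi_add !pi_scale [_ + _]pi_add; congr \pi.
apply: lfrac_eq; rewrite !lfE //.
by rewrite scalerDr !scalerA; congr (_ + _); congr (_ *: _); ring.
Qed.

Lemma scaleDl (x : type) :
  {morph scale^~ x : a b / a + b >-> (a + b : type)}.
Proof.
move=> a b; elim/quotW: x => x.
rewrite !pi_scale.
have -> : (\pi_type (scalef a x) + \pi_type (scalef b x) : type)
  = \pi_type (addf (scalef a x) (scalef b x)) by exact: pi_add.
apply/(@eqquotP _ _ type)/eqvP.
exists 1; rewrite ?rpred1 // !lfE.
by rewrite scalerDl !scalerDr !scalerA; congr (_ + _); congr (_ *: _); ring.
Qed.

HB.instance Definition _ :=
  GRing.Zmodule_isLmodule.Build R type scaleA scale1 scaleDr scaleDl.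

End Loc.
End Localization.
HB.export Localization.

Notation localization := Localization.type.

(* The fraction field K = {fraction R} of an integral domain R, viewed as an *)
(* R-module via a *: x = a%:F * x.                                           *)
Definition frac_mod (R : idomainType) : Type := {fraction R}.
HB.instance Definition _ (R : idomainType) :=
  GRing.Zmodule.on (frac_mod R).

Section FracMod.
Variable R : idomainType.
Definition frac_scale (a : R) (x : frac_mod R) : frac_mod R :=
  (tofrac a * (x : {fraction R}) : {fraction R}).
Lemma frac_scaleA a b x : frac_scale a (frac_scale b x) = frac_scale (a * b) x.
Proof. by rewrite /frac_scale rmorphM mulrA. Qed.
Lemma frac_scale1 : left_id 1 frac_scale.
Proof. by move=> x; rewrite /frac_scale rmorph1 mul1r. Qed.
Lemma frac_scaleDr : right_distributive frac_scale (@GRing.add (frac_mod R)).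
Proof. by move=> a x y; rewrite /frac_scale mulrDr. Qed.
Lemma frac_scaleDl (x : frac_mod R) :
  {morph frac_scale^~ x : a b / a + b >-> (a + b : frac_mod R)}.
Proof. by move=> a b; rewrite /frac_scale rmorphD mulrDl. Qed.
HB.instance Definition _ := GRing.Zmodule_isLmodule.Build R (frac_mod R)
  frac_scaleA frac_scale1 frac_scaleDr frac_scaleDl.
End FracMod.

(* Main.v *)
Require Import Defs.
From HB Require Import structures.
From mathcomp Require Import all_boot all_order all_algebra.
From mathcomp Require Import fraction generic_quotient.
From mathcomp Require Import all_classical topology finmap.

Import GRing.Theory.

Module Aux.
Definition col (r : nat) := 'I_r.+1.
HB.instance Definition _ r := Finite.on (col r).
HB.instance Definition _ r := isPointed.Build (col r) ord0.
Definition dcol r := discrete_topology (col r).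
HB.instance Definition _ r := DiscreteTopology.on (dcol r).
HB.instance Definition _ r := Pointed.on (dcol r).
Local Open Scope classical_set_scope.
Module Cpt.
Import ArrowAsProduct.
Definition CT (X : choiceType) r := forall x : X, dcol r.
HB.instance Definition _ X r := Topological.on (CT X r).
HB.instance Definition _ X r := Pointed.on (CT X r).
Section S.
Variables (X : choiceType) (r : nat).
Lemma cT : compact [set: CT X r].
Proof.
have := @tychonoff X (fun _ => dcol r) (fun _ => setT) (fun _ => @finite_compact (dcol r) setT (@finite_finset (col r) setT)).
by congr compact; rewrite eqEsubset.
Qed.
Lemma popen (x : X) (k : col r) : open [set c : CT X r | (c : forall x : X, col r) x = k].
Proof.
apply: (@open_comp _ _ (@proj X (fun _ => dcol r) x) [set k]).
  move=> c _; exact: proj_continuous.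
exact: discrete_open.
Qed.
Lemma popen_seq (s : seq X) (k : col r) :
  open [set c : CT X r | forall x, x \in s -> (c : forall x : X, col r) x = k].
Proof.
elim: s => [|x s IH].
  have -> : [set c : CT X r | forall x, x \in [::] -> (c : forall x : X, col r) x = k] = setT.
    by apply/seteqP; split => // c _ x.
  exact: openT.
have -> : [set c : CT X r | forall y, y \in x :: s -> (c : forall x : X, col r) y = k] =
   [set c : CT X r | (c : forall x : X, col r) x = k] `&`
   [set c : CT X r | forall x, x \in s -> (c : forall x : X, col r) x = k].
  apply/seteqP; split => c /=.
    by move=> H; split => [|y ys]; apply: H; rewrite inE ?eqxx ?ys ?orbT.
  by move=> [H1 H2] y; rewrite inE => /orP[/eqP->|/H2].
exact: openI (popen x k) IH.
Qed.
End S.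

Lemma compactness (X : choiceType) (r l : nat) (P : ('I_l -> X) -> Prop) :
  (forall F : seq X, exists c : X -> col r, forall n, P n -> (forall j, n j \in F) ->
     exists j j', c (n j) != c (n j')) ->
  exists c : X -> col r, forall n, P n -> exists j j', c (n j) != c (n j').
Proof.
move=> HF.
pose I := {ffun 'I_l -> X}.
pose D := [set n : I | P n].
pose f := fun n : I => [set c : CT X r | exists j j', (c : forall x : X, col r) (n j) != c (n j')].
have := cT X r; rewrite compact_In0 => /(_ _ D f) [].
- exists f => // n Dn; last by rewrite setTI.
  have -> : f n = ~` \bigcup_(k in setT) [set c : CT X r | forall x, x \in [seq n j | j <- enum 'I_l] -> (c : forall x : X, col r) x = k].
    apply/seteqP; split => c /=.
      move=> [j [j' Hjj']] [k _ /= Hk]; move/negP: Hjj'; apply.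
      by rewrite !Hk ?map_f ?mem_enum.
    move=> Hc; apply: contrapT => Hn; apply: Hc.
    case: (pickP (@predT 'I_l)) => [j0 _|nol]; last first.
      by exists ord0 => // x /mapP [j _ _]; move: (nol j).
    exists ((c : forall x : X, col r) (n j0)) => // x /mapP [j _ ->].
    apply: contrapT => Hj; apply: Hn; exists j, j0; exact/eqP.
  rewrite closedC; apply: bigcup_open => k _; exact: popen_seq.
- move=> D' D'D.
  have [c Hc] := HF [seq (n : I) j | n <- enum_fset D', j <- enum 'I_l].
  exists c => n /= nD'.
  apply: Hc.
    by have := D'D n nD'; rewrite in_setE.
  move=> j; apply: (@allpairs_f _ _ _ (fun (n : I) j => n j)) => //.
  by rewrite mem_enum.
- move=> c Hc; exists c => n Pn.
  have := Hc [ffun j => n j]; rewrite /D /f /=.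
  case => [|j [j' H]]; last by exists j, j'; rewrite !ffunE in H.
  suff -> : fun_of_fin [ffun j => n j] = n by [].
  by apply/funext => j; rewrite ffunE.
Qed.
End Cpt.

Local Open Scope ring_scope.
Section T.
Variables (R : comPzRingType) (M N : lmodType R) (i : M -> N).
Hypotheses (iZ : forall a m, i (a *: m) = a *: i m)
  (iD : forall m1 m2, i (m1 + m2) = i m1 + i m2) (iI : injective i).
Definition goods (s : R) := forall y : N, s *: y = 0 -> y = 0.
Hypothesis Hden : forall x : N, exists2 s, goods s & exists m, i m = s *: x.
Lemma i0 : i 0 = 0.
Proof. have h := iD 0 0; rewrite addr0 in h; by apply/(addrI (i 0)); rewrite addr0 -h. Qed.
Lemma iS (I : Type) (s : seq I) (F : I -> M) : i (\sum_(j <- s) F j) = \sum_(j <- s) i (F j).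
Proof. exact: (big_morph i iD i0). Qed.
Lemma den_seq (F : seq N) : exists2 s, goods s & forall x, x \in F -> exists m, i m = s *: x.
Proof.
elim: F => [|x F [s2 g2 H2]].
  by exists 1 => // y; rewrite scale1r.
have [s1 g1 [m1 H1]] := Hden x.
exists (s1 * s2).
  by move=> y; rewrite -scalerA => /g1 /g2.
move=> y; rewrite inE => /orP[/eqP->|/H2 [m2 Hm2]].
  by exists (s2 *: m1); rewrite iZ H1 scalerA mulrC.
by exists (s1 *: m2); rewrite iZ Hm2 scalerA.
Qed.

Lemma transfer k l (A : 'M[R]_(k, l)) r : (0 < r)%N ->
  partition_regular M A r <-> partition_regular N A r.
Proof.
move=> r0; split.
  move=> PRM chi; have [n [Hs [j Hj] Hm]] := PRM (fun m => chi (i m)).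
  exists (fun j => i (n j)); split.
  - move=> a; rewrite -[RHS]i0 -[X in _ = i X](Hs a) (big_morph i iD i0).
    by apply: eq_bigr => j' _; rewrite iZ.
  - by exists j; apply: contra Hj => /eqP; rewrite -i0 => /iI ->.
  - by move=> j1 j2; apply: Hm.
move=> PRN; apply: contrapT => /existsNP [chi0 Hchi0].
have Hbad : forall n : 'I_l -> M, (forall a, \sum_(j < l) A a j *: n j = 0) ->
    (exists j, n j != 0) -> exists j j', chi0 (n j) != chi0 (n j').
  move=> n Hs Hnz; apply: contrapT => Hn; apply: Hchi0; exists n; split => //.
  move=> j j'; apply/eqP; apply: contrapT => H; apply: Hn; exists j, j'; exact/negP.
case: r r0 chi0 Hchi0 PRN Hbad => // r' _ chi0 _ PRN Hbad.
have [|c Hc] := @Cpt.compactness (N : choiceType) r' l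
  (fun n => (forall a, \sum_(j < l) A a j *: n j = 0) /\ exists j, n j != 0).
  move=> F; have [s gs Hs] := den_seq F.
  have Hex : forall x : N, exists m : M, x \in F -> i m = s *: x.
    move=> x; case: (boolP (x \in F)) => [/Hs [m Hm]|xF]; first by exists m.
    by exists 0 => /negP.
  have [g Hg] := choice Hex.
  exists (fun x => chi0 (g x)) => n [Hsum [j Hj]] HnF.
  apply: (Hbad (fun j => g (n j))).
    move=> a; apply: iI; rewrite (big_morph i iD i0) i0.
    under eq_bigr => j' _ do rewrite iZ Hg // scalerA mulrC -scalerA.
    by rewrite -scaler_sumr Hsum scaler0.
  exists j; apply/eqP => h; move/eqP: Hj; apply; apply: gs.
  by rewrite -Hg // h i0.
have [n [Hs Hnz Hm]] := PRN c.
have [j [j' /eqP]] := Hc n (conj Hs Hnz); apply; exact: Hm.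
Qed.
End T.
End Aux.

Local Open Scope ring_scope.

Local Open Scope quotient_scope.
Section L.
Variables (R : comPzRingType) (M : lmodType R) (S : mulrClosed R).
Hypothesis tf : forall (s : R) (m : M), s \in S -> s *: m = 0 -> m = 0.
Local Notation N := (localization M S).
Lemma scaleE a (x : N) : a *: x = Localization.scale a x. Proof. by []. Qed.
Lemma addE (x y : N) : x + y = Localization.add x y. Proof. by []. Qed.
Lemma zeroE : (0 : N) = Localization.zero M S. Proof. by []. Qed.
Definition iota (m : M) : N := \pi_N (@Localization.MkLfrac R M S (m, 1) (rpred1 S)).
Lemma iotaZ a m : iota (a *: m) = a *: iota m.
Proof.
rewrite /iota; symmetry.
rewrite scaleE.
rewrite Localization.pi_scale.
by congr \pi; apply: Localization.lfrac_eq.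
Qed.
Lemma iotaD m1 m2 : iota (m1 + m2) = iota m1 + iota m2.
Proof.
rewrite /iota; symmetry.
rewrite addE.
rewrite Localization.pi_add.
apply/eqquotP/Localization.eqvP; exists 1; rewrite ?rpred1 //.
by rewrite /Localization.num /Localization.den /= !scale1r !mul1r.
Qed.
Lemma iotaI : injective iota.
Proof.
move=> m1 m2 /eqquotP /Localization.eqvP [u uS].
rewrite /Localization.num /Localization.den /= mulr1 => h.
apply/eqP; rewrite -subr_eq0; apply/eqP; apply: (tf _ _ uS); by rewrite scalerBr h subrr.
Qed.
Lemma iotaden (x : N) : exists2 s, (forall y : N, s *: y = 0 -> y = 0) & exists m, iota m = s *: x.
Proof.
have sS : Localization.den (repr x) \in S by exact: Localization.denP.
exists (Localization.den (repr x)).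
  move=> y; rewrite -[y]reprK scaleE Localization.pi_scale zeroE /Localization.zero.
  move/eqquotP/Localization.eqvP => [u uS]; rewrite !Localization.lfE scaler0 mulr1 scalerA => h.
  have h0 := tf _ _ (rpredM uS sS) h.
  apply/eqquotP/Localization.eqvP; exists 1; rewrite ?rpred1 //.
  by rewrite !Localization.lfE h0 !scaler0.
exists (Localization.num (repr x)).
rewrite /iota -[X in _ = _ *: X]reprK scaleE Localization.pi_scale.
apply/eqquotP/Localization.eqvP; exists 1; rewrite ?rpred1 //.
rewrite !Localization.lfE /Localization.num /Localization.den /=.
by rewrite !mul1r scale1r.
Qed.
End L.

Section F.
Variable R : idomainType.
Definition fi (a : R^o) : frac_mod R := @tofrac R a.
Lemma fiZ a (b : R^o) : fi (a *: b) = a *: fi b.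
Proof. exact: rmorphM. Qed.
Lemma fiD (a b : R^o) : fi (a + b) = fi a + fi b.
Proof. exact: rmorphD. Qed.
Lemma fiI : injective fi.
Proof. by move=> a b /eqP; rewrite /fi tofrac_eq => /eqP. Qed.
Lemma fiden (x : frac_mod R) : exists2 s, (forall y : frac_mod R, s *: y = 0 -> y = 0) & exists m, fi m = s *: x.
Proof.
exists (\d_(repr x)).
  move=> y /eqP; rewrite [_ *: _]/(tofrac _ * _) mulf_eq0 tofrac_eq0 (negbTE (denom_ratioP _)) /=.
  by move/eqP.
exists (\n_(repr x)).
rewrite [_ *: _]/(tofrac _ * _) /fi.
rewrite -[X in _ = _ * X]reprK !piE.
apply/eqmodP; rewrite /= FracField.equivfE.
rewrite /FracField.mulf !numden_Ratio ?oner_neq0 ?mulf_neq0 ?oner_neq0 ?denom_ratioP //.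
by rewrite !mul1r mulrC.
Qed.

End F.

Theorem proposition1p5 :
  (forall (R : comPzRingType) (M : lmodType R) (S : mulrClosed R)
          (k l : nat) (A : 'M[R]_(k, l)) (r : nat),
      (0 < r)%N ->
      (forall (s : R) (m : M), s \in S -> s *: m = 0 -> m = 0) ->
      (partition_regular M A r <->
       partition_regular (localization M S) A r))
  /\
  (forall (R : idomainType) (k l : nat) (A : 'M[R]_(k, l)) (r : nat),
      (0 < r)%N ->
      (partition_regular R^o A r <-> partition_regular (frac_mod R) A r)).
Proof.
split.
  move=> R M S k l A r r0 tf.
  exact: (@Aux.transfer R M (localization M S) (@iota R M S) (@iotaZ R M S) (@iotaD R M S) (@iotaI R M S tf) (@iotaden R M S tf) k l A r r0).
move=> R k l A r r0.
exact: (@Aux.transfer R R^o (frac_mod R) (@fi R) (@fiZ R) (@fiD R) (@fiI R) (@fiden R) k l A r r0).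
Qed.
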